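(* Let $(f_k(t))_{k=0,\ldots,n}$, $t\in[0,1]$, be a constant speed path with speed $v>0$ and coefficients $\boldsymbol\alpha(t)\in\mathcal A$, where $f_k(t)>0$ for all $k\in\{0,\ldots,n\}$ and all $t$, the functions $t\mapsto f_k(t)$ are twice continuously differentiable and the functions $t\mapsto\alpha_k(t)$ are continuously differentiable. Let $t^*\in(0,1)$ and suppose that at $t=t^*$ the following three conditions hold: (1) ($k$-monotonicity) $\alpha_k(t^* )\le\alpha_{k+1}(t^* )$ for all $k=0,\ldots,n-1$; (2) ($t$-monotonicity) $\frac{\partial\alpha_k}{\partial t}(t^* )\ge 0$ for all $k=0,\ldots,n$; (3) (GLC) for all $k=0,\ldots,n-2$, $$\alpha_{k+1}(1-\alpha_{k+1})f_{k+1}^2-\alpha_{k+2}(1-\alpha_k)f_kf_{k+2}\ge 0$$ (all quantities evaluated at $t^*$). Then the entropy $H(t)=-\sum_{k=0}^n f_k(t)\log f_k(t)$ satisfies $H''(t^* )\le 0$.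
   Context: Fix an integer $n\ge1$. For a sequence $(a_k)_{k\in\mathbb Z}$ write $\nabla_1 a_k=a_k-a_{k-1}$. Functions indexed by $k$ are extended by $0$ outside their stated index range. $\mathcal A$ denotes the set of measurable $\boldsymbol\alpha(t)=(\alpha_0(t),\ldots,\alpha_n(t))$, $t\in[0,1]$, with $\alpha_0\equiv0$, $\alpha_n\equiv1$ and $0\le\alpha_k(t)\le1$ for all $k,t$. A family $(f_k(t))_{k=0,\ldots,n}$ of probability mass functions on $\{0,\ldots,n\}$ is a constant speed path with speed $v\in\mathbb R$ and coefficients $\boldsymbol\alpha\in\mathcal A$ if $\frac{\partial f_k}{\partial t}(t)=-v\,\nabla_1 g_k(t)$ for $k=0,\ldots,n$, where $g_k(t)=\alpha_{k+1}(t)f_{k+1}(t)+(1-\alpha_k(t))f_k(t)$ for $k=0,\ldots,n-1$ and $g_k=0$ for $k\notin\{0,\ldots,n-1\}$. *)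

(* Defs.v *)
From Stdlib Require Import Reals.
Open Scope R_scope.

Definition in01 (t : R) : Prop := 0 <= t <= 1.
Definition in01o (t : R) : Prop := 0 < t < 1.

Definition alpha_in_A (n : nat) (alpha : nat -> R -> R) : Prop :=
  forall t, in01 t ->
    alpha 0%nat t = 0 /\ alpha n t = 1 /\
    (forall k, (k <= n)%nat -> 0 <= alpha k t <= 1).

Definition is_pmf (n : nat) (f : nat -> R -> R) (t : R) : Prop :=
  (forall k, (k <= n)%nat -> 0 <= f k t) /\ sum_f_R0 (fun k => f k t) n = 1.

Definition gfun (n : nat) (f alpha : nat -> R -> R) (k : nat) (t : R) : R :=
  if Nat.ltb k n then alpha (S k) t * f (S k) t + (1 - alpha k t) * f k t else 0.

Definition nabla_g (n : nat) (f alpha : nat -> R -> R) (k : nat) (t : R) : R :=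
  gfun n f alpha k t - match k with O => 0 | S j => gfun n f alpha j t end.

Definition entropy (n : nat) (f : nat -> R -> R) (t : R) : R :=
  - sum_f_R0 (fun k => f k t * ln (f k t)) n.

(* Main.v *)
Require Import Defs.
From Stdlib Require Import Reals Lra Psatz.
Open Scope R_scope.


Lemma ln_le_xm1 (x : R) : 0 < x -> ln x <= x - 1.
Proof. intros Hx. pose proof (exp_ineq1_le (ln x)) as H. rewrite exp_ln in H; lra. Qed.

Lemma dpl_eq (f : R -> R) x l1 l2 : derivable_pt_lim f x l1 -> l1 = l2 -> derivable_pt_lim f x l2.
Proof. intros H <-; exact H. Qed.

Lemma dpl_loc (f g : R -> R) x l a b : a < x < b -> (forall t, a < t < b -> f t = g t) ->
  derivable_pt_lim f x l -> derivable_pt_lim g x l.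
Proof.
  intros Hx E H eps Heps. destruct (H eps Heps) as [d Hd].
  assert (Hp : 0 < Rmin d (Rmin (x - a) (b - x))).
  { destruct d as [d dp]; simpl. apply Rmin_pos; [exact dp|apply Rmin_pos; lra]. }
  exists (mkposreal _ Hp). intros h hn hl. simpl in hl.
  pose proof (Rmin_l d (Rmin (x - a) (b - x))).
  pose proof (Rmin_r d (Rmin (x - a) (b - x))).
  pose proof (Rmin_l (x - a) (b - x)). pose proof (Rmin_r (x - a) (b - x)).
  rewrite <- (E x) by lra. rewrite <- (E (x + h)).
  - apply Hd; [exact hn| lra].
  - apply Rabs_def2 in hl. lra.
Qed.

Lemma dpl_plus (f g : R -> R) x a b : derivable_pt_lim f x a -> derivable_pt_lim g x b ->
  derivable_pt_lim (fun t => f t + g t) x (a + b).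
Proof. intros; exact (derivable_pt_lim_plus f g x a b H H0). Qed.
Lemma dpl_minus (f g : R -> R) x a b : derivable_pt_lim f x a -> derivable_pt_lim g x b ->
  derivable_pt_lim (fun t => f t - g t) x (a - b).
Proof. intros; exact (derivable_pt_lim_minus f g x a b H H0). Qed.
Lemma dpl_mult (f g : R -> R) x a b : derivable_pt_lim f x a -> derivable_pt_lim g x b ->
  derivable_pt_lim (fun t => f t * g t) x (a * g x + f x * b).
Proof. intros; exact (derivable_pt_lim_mult f g x a b H H0). Qed.
Lemma dpl_opp (f : R -> R) x a : derivable_pt_lim f x a ->
  derivable_pt_lim (fun t => - f t) x (- a).
Proof. intros; exact (derivable_pt_lim_opp f x a H). Qed.
Lemma dpl_const (c x : R) : derivable_pt_lim (fun _ => c) x 0.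
Proof. exact (derivable_pt_lim_const c x). Qed.
Lemma dpl_id (x : R) : derivable_pt_lim (fun t => t) x 1.
Proof. exact (derivable_pt_lim_id x). Qed.
Lemma dpl_ln (f : R -> R) x a : derivable_pt_lim f x a -> 0 < f x ->
  derivable_pt_lim (fun t => ln (f t)) x (/ f x * a).
Proof. intros H P. exact (derivable_pt_lim_comp f ln x a (/ f x) H (derivable_pt_lim_ln _ P)). Qed.

Lemma dpl_sum (h h' : nat -> R -> R) x N :
  (forall k, (k <= N)%nat -> derivable_pt_lim (h k) x (h' k x)) ->
  derivable_pt_lim (fun t => sum_f_R0 (fun k => h k t) N) x (sum_f_R0 (fun k => h' k x) N).
Proof.
  induction N as [|N IH]; intros H.
  - simpl. apply H. lia.
  - simpl. apply dpl_plus. apply IH. intros; apply H; lia. apply H; lia.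
Qed.

Lemma sum_tele (a b P : nat -> R) N : (forall k, (k <= N)%nat -> a k = b k + P (S k) - P k) ->
  sum_f_R0 a N = sum_f_R0 b N + P (S N) - P 0%nat.
Proof.
  induction N as [|N IH]; intros H.
  - simpl. apply H. lia.
  - simpl. rewrite IH by (intros; apply H; lia). rewrite (H (S N)) by lia. ring.
Qed.

Lemma sum_nonpos (a : nat -> R) N : (forall k, (k <= N)%nat -> a k <= 0) -> sum_f_R0 a N <= 0.
Proof.
  induction N as [|N IH]; intros H.
  - simpl. apply H. lia.
  - simpl. pose proof (H (S N) (le_n _)). assert (sum_f_R0 a N <= 0) by (apply IH; intros; apply H; lia). lra.
Qed.

Lemma ln_le_half (x : R) : 1 <= x -> 2 * x * ln x <= x * x - 1.
Proof.
  intros Hx. destruct (Req_dec x 1) as [->|Hne].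
  - rewrite ln_1. lra.
  - assert (Hlt : 1 < x) by lra.
    destruct (MVT_cor2 (fun z => z * z - 1 - 2 * z * ln z) (fun z => 2 * (z - 1 - ln z)) 1 x Hlt) as [c [Hc1 Hc2]].
    + intros c Hc.
      apply dpl_eq with (1 * c + c * 1 - 0 - ((0 * c + 2 * 1) * ln c + 2 * c * (/ c * 1))).
      * apply dpl_minus. apply dpl_minus. apply dpl_mult; apply dpl_id. apply dpl_const.
        apply dpl_mult. apply dpl_mult. apply dpl_const. apply dpl_id. apply dpl_ln. apply dpl_id. simpl; lra.
      * field. lra.
    + rewrite ln_1 in Hc1. pose proof (ln_le_xm1 c ltac:(lra)).
      assert (0 <= 2 * (c - 1 - ln c) * (x - 1)) by (apply Rmult_le_pos; lra). lra.
Qed.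


Lemma ln_ub (r R0 : R) : 1 <= R0 -> 0 < r ->
  ln r <= (R0 * R0 - 1) / (2 * R0) + r / R0 - 1.
Proof.
  intros HR Hr.
  assert (HR0 : 0 < R0) by lra.
  assert (E : r = R0 * (r / R0)) by (field; lra).
  assert (Hq : 0 < r / R0) by (apply Rdiv_lt_0_compat; lra).
  rewrite E at 1. rewrite ln_mult by lra.
  pose proof (ln_le_xm1 _ Hq).
  pose proof (ln_le_half R0 HR).
  assert (ln R0 <= (R0 * R0 - 1) / (2 * R0)).
  { apply (Rmult_le_reg_l (2 * R0)); [lra|]. field_simplify; lra. }
  lra.
Qed.

Lemma core (w a b r s : R) : 0 < w -> 0 < a -> a <= b -> b < 1 ->
  b / a <= r -> (1 - a) / (1 - b) <= s ->
  0 <= w * (r - 1) + w * (s - 1) - w * (1 + (b - a)) * (ln r + ln s).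
Proof.
  intros Hw Ha Hab Hb Hr Hs.
  set (R0 := b / a) in *. set (S0 := (1 - a) / (1 - b)) in *.
  assert (HR1 : 1 <= R0).
  { unfold R0. apply (Rmult_le_reg_l a); [lra|]. field_simplify; lra. }
  assert (HS1 : 1 <= S0).
  { unfold S0. apply (Rmult_le_reg_l (1 - b)); [lra|]. field_simplify; lra. }
  pose proof (ln_ub r R0 HR1 ltac:(lra)) as Ur.
  pose proof (ln_ub s S0 HS1 ltac:(lra)) as Us.
  assert (Key : (r - 1) + (s - 1) - (1 + (b - a)) *
     ((R0 * R0 - 1) / (2 * R0) + r / R0 - 1 + ((S0 * S0 - 1) / (2 * S0) + s / S0 - 1))
     = (r - R0) * ((b - a) * (1 - a) / b) + (s - S0) * (b * (b - a) / (1 - a))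
       + (b - a) * (b - a) * ((1 - a - b) * (1 - a - b)) / (2 * a * b * (1 - a) * (1 - b))).
  { unfold R0, S0. field. repeat split; lra. }
  assert (P1 : 0 <= (r - R0) * ((b - a) * (1 - a) / b)).
  { apply Rmult_le_pos; [lra|]. apply Rmult_le_pos; [apply Rmult_le_pos; lra|].
    apply Rlt_le, Rinv_0_lt_compat; lra. }
  assert (P2 : 0 <= (s - S0) * (b * (b - a) / (1 - a))).
  { apply Rmult_le_pos; [lra|]. apply Rmult_le_pos; [apply Rmult_le_pos; lra|].
    apply Rlt_le, Rinv_0_lt_compat; lra. }
  assert (P3 : 0 <= (b - a) * (b - a) * ((1 - a - b) * (1 - a - b)) / (2 * a * b * (1 - a) * (1 - b))).
  { apply Rmult_le_pos. apply Rmult_le_pos; apply Rle_0_sqr.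
    apply Rlt_le, Rinv_0_lt_compat. repeat apply Rmult_lt_0_compat; lra. }
  assert (Hc : 0 <= 1 + (b - a)) by lra.
  assert (0 <= (r - 1) + (s - 1) - (1 + (b - a)) * (ln r + ln s)).
  { assert ((1 + (b - a)) * (ln r + ln s) <= (1 + (b - a)) *
     ((R0 * R0 - 1) / (2 * R0) + r / R0 - 1 + ((S0 * S0 - 1) / (2 * S0) + s / S0 - 1))).
    { apply Rmult_le_compat_l; lra. }
    lra. }
  replace (w * (r - 1) + w * (s - 1) - w * (1 + (b - a)) * (ln r + ln s))
    with (w * ((r - 1) + (s - 1) - (1 + (b - a)) * (ln r + ln s))) by ring.
  apply Rmult_le_pos; lra.
Qed.


Lemma core0 (w r s : R) : 0 < w -> 0 < r -> 0 < s ->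
  0 <= w * (r - 1) + w * (s - 1) - w * (1 + 0) * (ln r + ln s).
Proof.
  intros. pose proof (ln_le_xm1 r H0). pose proof (ln_le_xm1 s H1).
  replace (w * (r - 1) + w * (s - 1) - w * (1 + 0) * (ln r + ln s))
    with (w * ((r - 1 - ln r) + (s - 1 - ln s))) by ring.
  apply Rmult_le_pos; lra.
Qed.

Lemma ln4 (x y z u : R) : 0 < x -> 0 < y -> 0 < z -> 0 < u ->
  ln (x * y / (z * u)) = ln x + ln y - ln z - ln u.
Proof.
  intros. unfold Rdiv. rewrite ln_mult by (try apply Rinv_0_lt_compat; nra).
  rewrite ln_Rinv by nra. rewrite !ln_mult by nra. ring.
Qed.

Lemma localT (F0 F1 F2 a0 a1 a2 g0 g1 : R) :
  0 < F0 -> 0 < F1 -> 0 < F2 -> 0 <= a0 -> a0 <= a1 -> a1 <= a2 -> a2 <= 1 ->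
  a1 * (1 - a1) * F1 ^ 2 - a2 * (1 - a0) * F0 * F2 >= 0 ->
  g0 = a1 * F1 + (1 - a0) * F0 -> g1 = a2 * F2 + (1 - a1) * F1 ->
  0 <= g1 * (g1 / F2 - g0 / F1) + g0 * (g0 / F0 - g1 / F1)
       - ((1 - a1) * g0 + a1 * g1) * (2 * ln F1 - ln F0 - ln F2).
Proof.
  intros H0 H1 H2 Ha0 H01 H12 Ha2 Hglc Eg0 Eg1.
  assert (Pg0 : 0 < g0).
  { rewrite Eg0. pose proof (Rmult_le_pos (a1 - a0) F1 ltac:(lra) ltac:(lra)).
    destruct (Rle_lt_dec a0 (1/2)); nra. }
  assert (Pg1 : 0 < g1).
  { rewrite Eg1. pose proof (Rmult_le_pos (a2 - a1) F2 ltac:(lra) ltac:(lra)).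
    destruct (Rle_lt_dec a1 (1/2)); nra. }
  set (w := g0 * g1 / F1). set (r := g1 * F1 / (F2 * g0)). set (s := g0 * F1 / (F0 * g1)).
  set (b := a1 * F1 / g0). set (a := a2 * F2 / g1).
  assert (Pw : 0 < w) by (unfold w; apply Rdiv_lt_0_compat; nra).
  assert (Pr : 0 < r) by (unfold r; apply Rdiv_lt_0_compat; nra).
  assert (Ps : 0 < s) by (unfold s; apply Rdiv_lt_0_compat; nra).
  assert (Elog : ln r + ln s = 2 * ln F1 - ln F0 - ln F2).
  { unfold r, s. rewrite !ln4 by lra. ring. }
  assert (Ec : (1 - a1) * g0 + a1 * g1 = w * (1 + (b - a))).
  { unfold w, b, a. rewrite Eg0, Eg1. field. split; nra. }
  assert (ET : g1 * (g1 / F2 - g0 / F1) + g0 * (g0 / F0 - g1 / F1)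
       - ((1 - a1) * g0 + a1 * g1) * (2 * ln F1 - ln F0 - ln F2)
       = w * (r - 1) + w * (s - 1) - w * (1 + (b - a)) * (ln r + ln s)).
  { rewrite Elog, Ec. unfold w, r, s. field. repeat split; lra. }
  rewrite ET.
  destruct (Req_dec a2 0) as [Z2|Z2].
  { assert (a1 = 0) by lra. assert (a0 = 0) by lra.
    assert (b = 0) by (unfold b; rewrite H; field; lra). assert (a = 0) by (unfold a; rewrite Z2; field; lra).
    replace (b - a) with 0 by lra. apply core0; lra. }
  destruct (Req_dec a0 1) as [Z0|Z0].
  { assert (a1 = 1) by lra. assert (a2 = 1) by lra.
    assert (b = 1).
    { unfold b. rewrite Eg0. rewrite H, Z0. field. lra. }
    assert (a = 1).
    { unfold a. rewrite Eg1. rewrite H, H3. field. lra. }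
    replace (b - a) with 0 by lra. apply core0; lra. }
  assert (Pa : 0 < a) by (unfold a; apply Rdiv_lt_0_compat; nra).
  assert (Hb1 : b < 1).
  { unfold b. apply (Rmult_lt_reg_l g0); [lra|]. field_simplify; nra. }
  assert (Hab : a <= b).
  { assert (b - a = (a1 * (1 - a1) * F1 ^ 2 - a2 * (1 - a0) * F0 * F2) / (g0 * g1)).
    { assert (EE : a1 * (1 - a1) * F1 ^ 2 - a2 * (1 - a0) * F0 * F2 = a1 * F1 * g1 - a2 * F2 * g0)
        by (rewrite Eg0, Eg1; ring).
      rewrite EE. unfold a, b. field. split; lra. }
    assert (0 <= (a1 * (1 - a1) * F1 ^ 2 - a2 * (1 - a0) * F0 * F2) / (g0 * g1)).
    { apply Rmult_le_pos; [lra|]. apply Rlt_le, Rinv_0_lt_compat; nra. }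
    lra. }
  apply core; try lra.
  - assert (r - b / a = g1 * F1 / (F2 * g0) * ((a2 - a1) / a2)).
    { unfold r, b, a. field. repeat split; lra. }
    assert (0 <= g1 * F1 / (F2 * g0) * ((a2 - a1) / a2)).
    { apply Rmult_le_pos; [apply Rlt_le, Rdiv_lt_0_compat; nra|]. apply Rmult_le_pos; [lra|]. apply Rlt_le, Rinv_0_lt_compat; lra. }
    lra.
  - assert (s - (1 - a) / (1 - b) = g0 * F1 / (F0 * g1) * ((a1 - a0) / (1 - a0))).
    { unfold s, b, a. 
      assert (E1 : 1 - a2 * F2 / g1 = (1 - a1) * F1 / g1) by (rewrite Eg1; field; lra).
      assert (E2 : 1 - a1 * F1 / g0 = (1 - a0) * F0 / g0) by (rewrite Eg0; field; lra).
      rewrite E1, E2. field. repeat split; try lra. }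
    assert (0 <= g0 * F1 / (F0 * g1) * ((a1 - a0) / (1 - a0))).
    { apply Rmult_le_pos; [apply Rlt_le, Rdiv_lt_0_compat; nra|]. apply Rmult_le_pos; [lra|]. apply Rlt_le, Rinv_0_lt_compat; lra. }
    lra.
Qed.


Definition Gs (n : nat) (F A : nat -> R) (k : nat) : R :=
  if Nat.ltb k n then A (S k) * F (S k) + (1 - A k) * F k else 0.
Definition prv (h : nat -> R) (k : nat) : R := match k with O => 0 | S j => h j end.
Definition DFs n F A v k := - v * (Gs n F A k - prv (Gs n F A) k).
Definition Gam n F A (B : nat -> R) v k :=
  if Nat.ltb k n then B (S k) * F (S k) + A (S k) * DFs n F A v (S k)
     + (- B k * F k + (1 - A k) * DFs n F A v k) else 0.
Definition DDFs n F A B v k := - v * (Gam n F A B v k - prv (Gam n F A B v) k).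
Definition cc (A G : nat -> R) k := (1 - A k) * prv G k + A k * G k.
Definition EE (F : nat -> R) k := 2 * ln (F k) - ln (F (pred k)) - ln (F (S k)).
Definition TT (F A G : nat -> R) k :=
  G k * (G k / F (S k) - prv G k / F k) + prv G k * (prv G k / F (pred k) - G k / F k)
  - cc A G k * EE F k.
Definition Bt n (B : nat -> R) k := if Nat.leb k n then B k else 0.
Definition QQ n F B k := Bt n B k * F k * (ln (F (pred k)) - ln (F k)).
Definition P2 F A G k := cc A G k * (ln (F (pred k)) - ln (F k))
  + prv G k * prv G k / F (pred k) - prv G k * prv G k / F k.

Lemma ln_le' x y : 0 < x -> x <= y -> ln x <= ln y.
Proof. intros Hx Hxy. destruct (Req_dec x y) as [->|H]; [lra|]. left; apply ln_increasing; lra. Qed.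

Lemma Gs_ge n F A k : (n <= k)%nat -> Gs n F A k = 0.
Proof. intros H. unfold Gs. replace (Nat.ltb k n) with false; [reflexivity|]. symmetry; apply Nat.ltb_ge; lia. Qed.
Lemma Gs_lt n F A k : (k < n)%nat -> Gs n F A k = A (S k) * F (S k) + (1 - A k) * F k.
Proof. intros H. unfold Gs. replace (Nat.ltb k n) with true; [reflexivity|]. symmetry; apply Nat.ltb_lt; lia. Qed.
Lemma Gam_ge n F A B v k : (n <= k)%nat -> Gam n F A B v k = 0.
Proof. intros H. unfold Gam. replace (Nat.ltb k n) with false; [reflexivity|]. symmetry; apply Nat.ltb_ge; lia. Qed.
Lemma Gam_lt n F A B v k : (k < n)%nat -> Gam n F A B v k =
  B (S k) * F (S k) + A (S k) * DFs n F A v (S k) + (- B k * F k + (1 - A k) * DFs n F A v k).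
Proof. intros H. unfold Gam. replace (Nat.ltb k n) with true; [reflexivity|]. symmetry; apply Nat.ltb_lt; lia. Qed.
Lemma Bt_le n B k : (k <= n)%nat -> Bt n B k = B k.
Proof. intros H. unfold Bt. replace (Nat.leb k n) with true; [reflexivity|]. symmetry; apply Nat.leb_le; lia. Qed.
Lemma Bt_gt n B k : (n < k)%nat -> Bt n B k = 0.
Proof. intros H. unfold Bt. replace (Nat.leb k n) with false; [reflexivity|]. symmetry; apply Nat.leb_gt; lia. Qed.

Lemma pointwise n F A B v k : (1 <= n)%nat -> (k <= n)%nat -> A n = 1 -> B n = 0 ->
  let G := Gs n F A in
  -(DDFs n F A B v k * (ln (F k) + 1) + DFs n F A v k * (DFs n F A v k / F k))
  = (- v * (Bt n B k * F k * EE F k) - v * v * TT F A G k)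
    + (v * prv (Gam n F A B v) (S k) * (ln (F (S k)) + 1) + v * QQ n F B (S k) - v * v * P2 F A G (S k))
    - (v * prv (Gam n F A B v) k * (ln (F k) + 1) + v * QQ n F B k - v * v * P2 F A G k).
Proof.
  intros Hn Hk An Bn G.
  unfold DDFs, TT, QQ, P2, EE, cc. cbn [prv pred].
  fold G. unfold DFs. fold G.
  destruct (Nat.lt_ge_cases k n) as [Hlt|Hge].
  - rewrite Gam_lt by lia. unfold DFs. fold G. cbn [prv].
    rewrite !Bt_le by lia. unfold Rdiv. ring.
  - assert (k = n) by lia. subst k.
    rewrite Gam_ge by lia. rewrite (Bt_gt n B (S n)) by lia. rewrite Bt_le by lia.
    assert (G n = 0) by (apply Gs_ge; lia). assert (G (S n) = 0) by (apply Gs_ge; lia).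
    rewrite H, H0, An, Bn. unfold Rdiv. ring.
Qed.


Lemma alg n F A B v : (1 <= n)%nat -> 0 < v ->
  (forall k, (k <= n)%nat -> 0 < F k) ->
  A 0%nat = 0 -> A n = 1 -> B 0%nat = 0 -> B n = 0 ->
  (forall k, (k <= n)%nat -> 0 <= A k <= 1) ->
  (forall k, (k < n)%nat -> A k <= A (S k)) ->
  (forall k, (k <= n)%nat -> 0 <= B k) ->
  (forall k, (k <= n)%nat -> (A k = 0 \/ A k = 1) -> B k = 0) ->
  (forall k, (k + 2 <= n)%nat ->
     A (S k) * (1 - A (S k)) * (F (S k)) ^ 2
     - A (S (S k)) * (1 - A k) * F k * F (S (S k)) >= 0) ->
  sum_f_R0 (fun k => -(DDFs n F A B v k * (ln (F k) + 1) + DFs n F A v k * (DFs n F A v k / F k))) n <= 0.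
Proof.
  intros Hn Hv HF A0 An B0 Bn HA Hmon HB HBz Hglc.
  set (G := Gs n F A).
  rewrite (sum_tele _ (fun k => - v * (Bt n B k * F k * EE F k) - v * v * TT F A G k)
     (fun k => v * prv (Gam n F A B v) k * (ln (F k) + 1) + v * QQ n F B k - v * v * P2 F A G k)).
  2:{ intros k Hk. apply pointwise; assumption. }
  assert (Pend : (v * prv (Gam n F A B v) (S n) * (ln (F (S n)) + 1) + v * QQ n F B (S n)
      - v * v * P2 F A G (S n)) - (v * prv (Gam n F A B v) 0 * (ln (F 0%nat) + 1) + v * QQ n F B 0
      - v * v * P2 F A G 0) = 0).
  { cbn [prv]. rewrite Gam_ge by lia. unfold QQ, P2, cc. cbn [prv pred].
    rewrite (Bt_gt n B (S n)) by lia.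
    assert (G n = 0) by (apply Gs_ge; lia). assert (G (S n) = 0) by (apply Gs_ge; lia).
    rewrite H, H0. unfold Rdiv. ring. }
  assert (Hs : sum_f_R0 (fun k => - v * (Bt n B k * F k * EE F k) - v * v * TT F A G k) n <= 0).
  { apply sum_nonpos. intros k Hk.
    assert (X1 : 0 <= Bt n B k * F k * EE F k).
    { rewrite Bt_le by lia.
      destruct k as [|j]. { rewrite B0. lra. }
      destruct (Nat.eq_dec (S j) n) as [Ejn|Ejn]. { rewrite Ejn, Bn. lra. }
      pose proof (HB (S j) Hk) as HBj.
      destruct (Req_dec (B (S j)) 0) as [Z|Z]. { rewrite Z. lra. }
      assert (HAj : 0 < A (S j) < 1).
      { pose proof (HA (S j) Hk). split.
        - destruct (Req_dec (A (S j)) 0) as [Z'|Z']; [exfalso; apply Z; apply HBz; auto|lra].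
        - destruct (Req_dec (A (S j)) 1) as [Z'|Z']; [exfalso; apply Z; apply HBz; auto|lra]. }
      apply Rmult_le_pos. apply Rmult_le_pos; [lra| left; apply HF; lia].
      unfold EE. cbn [pred].
      pose proof (Hglc j ltac:(lia)) as Gl.
      pose proof (HF j ltac:(lia)). pose proof (HF (S j) ltac:(lia)). pose proof (HF (S (S j)) ltac:(lia)).
      pose proof (Hmon j ltac:(lia)). pose proof (Hmon (S j) ltac:(lia)). pose proof (HA j ltac:(lia)).
      pose proof (HA (S (S j)) ltac:(lia)).
      assert (Hq : F j * F (S (S j)) <= F (S j) * F (S j)).
      { assert (A (S j) * (1 - A (S j)) <= A (S (S j)) * (1 - A j)) by nra.
        assert (0 < A (S j) * (1 - A (S j))) by nra.
        assert (0 < F j * F (S (S j))) by nra.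
        assert (A (S j) * (1 - A (S j)) * (F j * F (S (S j))) <= A (S j) * (1 - A (S j)) * (F (S j) * F (S j))).
        { assert (A (S j) * (1 - A (S j)) * (F j * F (S (S j))) <= A (S (S j)) * (1 - A j) * (F j * F (S (S j)))) by (apply Rmult_le_compat_r; lra).
          replace (F (S j) ^ 2) with (F (S j) * F (S j)) in Gl by ring. lra. }
        apply (Rmult_le_reg_l (A (S j) * (1 - A (S j)))); lra. }
      assert (Hpp : 0 < F j * F (S (S j))) by nra. pose proof (ln_le' _ _ Hpp Hq) as HL. rewrite !ln_mult in HL by lra. lra. }
    assert (X2 : 0 <= TT F A G k).
    { unfold TT, cc, EE.
      destruct k as [|j].
      - cbn [prv pred]. rewrite A0. pose proof (HF 1%nat Hn).
        assert (0 <= G 0%nat * (G 0%nat / F 1%nat)).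
        { unfold Rdiv; rewrite <- Rmult_assoc; apply Rmult_le_pos; [apply Rle_0_sqr|apply Rlt_le, Rinv_0_lt_compat; lra]. }
        unfold Rdiv in *. ring_simplify. lra.
      - cbn [prv pred].
        destruct (Nat.eq_dec (S j) n) as [Ejn|Ejn].
        + rewrite Ejn. rewrite An. assert (G n = 0) by (apply Gs_ge; lia). rewrite H.
          pose proof (HF j ltac:(lia)).
          assert (0 <= G j * (G j / F j)).
          { unfold Rdiv; rewrite <- Rmult_assoc; apply Rmult_le_pos; [apply Rle_0_sqr|apply Rlt_le, Rinv_0_lt_compat; lra]. }
          unfold Rdiv in *. ring_simplify. lra.
        + pose proof (HA j ltac:(lia)). pose proof (HA (S (S j)) ltac:(lia)).
          pose proof (Hmon j ltac:(lia)). pose proof (Hmon (S j) ltac:(lia)).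
          apply (localT (F j) (F (S j)) (F (S (S j))) (A j) (A (S j)) (A (S (S j))));
            try (apply HF; lia); try lra.
          * apply Hglc; lia.
          * apply Gs_lt; lia.
          * apply Gs_lt; lia. }
    assert (0 <= v * (Bt n B k * F k * EE F k)) by (apply Rmult_le_pos; lra).
    assert (0 <= v * v * TT F A G k) by (apply Rmult_le_pos; [nra|lra]).
    lra. }
  lra.
Qed.


Lemma deriv_min0 (g : R -> R) l x : 0 < x < 1 -> derivable_pt_lim g x l ->
  (forall t, 0 < t < 1 -> g x <= g t) -> l = 0.
Proof.
  intros Hx H Hm. pose (pr := exist (fun l0 => derivable_pt_lim g x l0) l H : derivable_pt g x).
  pose proof (deriv_minimum g 0 1 x pr ltac:(lra) ltac:(lra) (fun t h1 h2 => Hm t (conj h1 h2))).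
  exact H0.
Qed.
Lemma deriv_max0 (g : R -> R) l x : 0 < x < 1 -> derivable_pt_lim g x l ->
  (forall t, 0 < t < 1 -> g t <= g x) -> l = 0.
Proof.
  intros Hx H Hm. pose (pr := exist (fun l0 => derivable_pt_lim g x l0) l H : derivable_pt g x).
  pose proof (deriv_maximum g 0 1 x pr ltac:(lra) ltac:(lra) (fun t h1 h2 => Hm t (conj h1 h2))).
  exact H0.
Qed.

Lemma sum_opp (a : nat -> R) N : sum_f_R0 (fun k => - a k) N = - sum_f_R0 a N.
Proof. induction N as [|N IH]; simpl; [ring| rewrite IH; ring]. Qed.

Lemma sum_ext (a b : nat -> R) N : (forall k, (k <= N)%nat -> a k = b k) -> sum_f_R0 a N = sum_f_R0 b N.
Proof. induction N as [|N IH]; intros H; simpl. apply H; lia. rewrite IH by (intros; apply H; lia). rewrite H by lia. ring. Qed.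


Theorem theorem1p2
  (n : nat) (hn : (1 <= n)%nat)
  (f alpha : nat -> R -> R)
  (df d2f dalpha : nat -> R -> R)
  (v : R) (hv : 0 < v)
  (hA : alpha_in_A n alpha)
  (hpmf : forall t, in01 t -> is_pmf n f t)
  (hpos : forall t, in01 t -> forall k, (k <= n)%nat -> 0 < f k t)
  (hf1 : forall k t, (k <= n)%nat -> in01o t -> derivable_pt_lim (f k) t (df k t))
  (hf2 : forall k t, (k <= n)%nat -> in01o t -> derivable_pt_lim (df k) t (d2f k t))
  (hf2c : forall k t, (k <= n)%nat -> in01o t -> continuity_pt (d2f k) t)
  (ha1 : forall k t, (k <= n)%nat -> in01o t -> derivable_pt_lim (alpha k) t (dalpha k t))
  (ha1c : forall k t, (k <= n)%nat -> in01o t -> continuity_pt (dalpha k) t)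
  (hpath : forall k t, (k <= n)%nat -> in01o t -> df k t = - v * nabla_g n f alpha k t)
  (tstar : R) (htstar : in01o tstar)
  (hkmon : forall k, (k < n)%nat -> alpha k tstar <= alpha (S k) tstar)
  (htmon : forall k, (k <= n)%nat -> 0 <= dalpha k tstar)
  (hglc : forall k, (k + 2 <= n)%nat ->
     alpha (S k) tstar * (1 - alpha (S k) tstar) * (f (S k) tstar) ^ 2
     - alpha (S (S k)) tstar * (1 - alpha k tstar) * f k tstar * f (S (S k)) tstar >= 0) :
  exists dH : R -> R,
    (forall t, in01o t -> derivable_pt_lim (entropy n f) t (dH t)) /\
    exists h2 : R, derivable_pt_lim dH tstar h2 /\ h2 <= 0.
Proof.
  assert (Hin : forall t, in01o t -> in01 t) by (unfold in01o, in01; intros; lra).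
  exists (fun t => - sum_f_R0 (fun k => df k t * (ln (f k t) + 1)) n).
  split.
  { intros t Ht. unfold entropy.
    apply dpl_opp.
    apply (dpl_sum (fun k t => f k t * ln (f k t)) (fun k t => df k t * (ln (f k t) + 1))).
    intros k Hk. pose proof (hpos t (Hin t Ht) k Hk).
    eapply dpl_eq. apply dpl_mult. apply hf1; auto. apply dpl_ln. apply hf1; auto. auto.
    cbv beta. field. lra. }
  exists (- sum_f_R0 (fun k => d2f k tstar * (ln (f k tstar) + 1)
                      + df k tstar * (/ f k tstar * df k tstar + 0)) n).
  split.
  { apply dpl_opp.
    apply (dpl_sum (fun k t => df k t * (ln (f k t) + 1))
             (fun k t => d2f k t * (ln (f k t) + 1) + df k t * (/ f k t * df k t + 0))).
    intros k Hk. pose proof (hpos tstar (Hin _ htstar) k Hk).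
    eapply dpl_eq. apply dpl_mult. apply hf2; auto. apply dpl_plus. apply dpl_ln. apply hf1; auto. auto.
    apply dpl_const. cbv beta. ring. }
  set (F := fun k => f k tstar). set (A := fun k => alpha k tstar). set (B := fun k => dalpha k tstar).
  assert (Hts : 0 < tstar < 1) by exact htstar.
  destruct (hA tstar (Hin _ htstar)) as [A0 [An HA]].
  assert (HBz : forall k, (k <= n)%nat -> (A k = 0 \/ A k = 1) -> B k = 0).
  { intros k Hk [Z|Z]; unfold A, B in *.
    - apply (deriv_min0 (alpha k) _ tstar Hts (ha1 k tstar Hk htstar)).
      intros t Ht. rewrite Z. destruct (hA t (Hin t Ht)) as [_ [_ H]]. apply H; auto.
    - apply (deriv_max0 (alpha k) _ tstar Hts (ha1 k tstar Hk htstar)).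
      intros t Ht. rewrite Z. destruct (hA t (Hin t Ht)) as [_ [_ H]]. apply H; auto. }
  assert (HDF : forall k, (k <= n)%nat -> df k tstar = DFs n F A v k).
  { intros k Hk. rewrite hpath by auto. unfold DFs, nabla_g. destruct k; reflexivity. }
  set (dg := fun j => if Nat.ltb j n then dalpha (S j) tstar * f (S j) tstar + alpha (S j) tstar * df (S j) tstar
                 + (- dalpha j tstar * f j tstar + (1 - alpha j tstar) * df j tstar) else 0).
  assert (Hdg : forall j, (j <= n)%nat -> derivable_pt_lim (gfun n f alpha j) tstar (dg j)).
  { intros j Hj. unfold gfun, dg. destruct (Nat.ltb j n) eqn:E.
    - apply Nat.ltb_lt in E.
      eapply dpl_eq. apply dpl_plus. apply dpl_mult; [apply ha1|apply hf1]; auto; lia.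
      apply dpl_mult; [apply dpl_minus; [apply dpl_const|apply ha1]|apply hf1]; auto; lia.
      cbv beta. ring.
    - apply dpl_const. }
  assert (Hdg2 : forall j, (j <= n)%nat -> dg j = Gam n F A B v j).
  { intros j Hj. unfold dg, Gam. destruct (Nat.ltb j n) eqn:E; [|reflexivity].
    apply Nat.ltb_lt in E. rewrite !HDF by lia. reflexivity. }
  assert (HDDF : forall k, (k <= n)%nat -> d2f k tstar = DDFs n F A B v k).
  { intros k Hk.
    assert (D1 : derivable_pt_lim (fun t => - v * nabla_g n f alpha k t) tstar (d2f k tstar)).
    { apply (dpl_loc (df k) _ tstar _ 0 1 Hts). intros t Ht. apply hpath; auto. apply hf2; auto. }
    assert (D2 : derivable_pt_lim (fun t => - v * nabla_g n f alpha k t) tstar (- v * (dg k - prv dg k))).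
    { unfold nabla_g. destruct k as [|j].
      - eapply dpl_eq. apply dpl_mult. apply dpl_const. apply dpl_minus. apply Hdg; lia. apply dpl_const.
        simpl. ring.
      - eapply dpl_eq. apply dpl_mult. apply dpl_const. apply dpl_minus. apply Hdg; lia. apply Hdg; lia.
        simpl. ring. }
    rewrite (uniqueness_limite _ _ _ _ D1 D2). unfold DDFs.
    rewrite Hdg2 by lia. destruct k as [|j]; simpl; [reflexivity|]. rewrite Hdg2 by lia. reflexivity. }
  rewrite <- sum_opp.
  rewrite (sum_ext _ (fun k => -(DDFs n F A B v k * (ln (F k) + 1) + DFs n F A v k * (DFs n F A v k / F k)))).
  2:{ intros k Hk. rewrite <- HDF, <- HDDF by auto. unfold F. unfold Rdiv. ring. }
  apply alg; auto.
  all: try (intros k Hk; apply hpos; auto; fail).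
  all: try (apply HBz; [lia| left; exact A0]).
  all: try (apply HBz; [lia| right; exact An]).
Qed.
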